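(* Let $U$ be a finite ground set, $p$ a positive integer with $p\le |U|$, $\lambda\ge 0$, $d$ an $\alpha$-relaxed semi-metric distance on $U$ (for some $\alpha\ge 1$), and $f:2^U\to\mathbb{R}_{\ge 0}$ a non-negative monotone submodular set function. Consider the problem of finding $S\subseteq U$ with $|S|=p$ maximizing $\phi(S)=f(S)+\lambda\, d(S)$. Let $G$ be the set returned by the following greedy algorithm: start with $S=\emptyset$; while $|S|<p$, pick $u\in U\setminus S$ maximizing $\phi'_u(S)=\tfrac12\big(f(S\cup\{u\})-f(S)\big)+\lambda\sum_{v\in S}d(u,v)$ (ties broken arbitrarily) and set $S=S\cup\{u\}$. Then $$\phi(G)\;\ge\;\frac{1}{2\alpha}\,\phi(O),$$ where $O$ is an optimal solution, i.e. $\phi(O)=\max\{\phi(S): S\subseteq U,\ |S|=p\}$.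
   Context: An $\alpha$-relaxed semi-metric distance on $U$ (with $\alpha\ge 1$) is a function $d:U\times U\to\mathbb{R}_{\ge 0}$ with $d(u,v)=d(v,u)$, $d(u,u)=0$, satisfying $d(u,v)\le \alpha\,(d(v,w)+d(w,u))$ for all $u,v,w\in U$. For $S\subseteq U$, $d(S)=\sum_{\{u,v\}\subseteq S,\,u\ne v} d(u,v)$. A set function $f$ is monotone if $f(S)\le f(T)$ whenever $S\subseteq T$, and submodular if $f(S\cup\{u\})-f(S)\ge f(T\cup\{u\})-f(T)$ whenever $S\subseteq T$ and $u\notin T$. *)

(* Defs.v *)
From mathcomp Require Import all_boot all_order all_algebra.
Set Implicit Arguments. Unset Strict Implicit. Unset Printing Implicit Defensive.
Import Order.TTheory GRing.Theory Num.Theory.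
Local Open Scope ring_scope.

Section Defs.
Variables (R : realFieldType) (U : finType).

Definition relaxed_semimetric (alpha : R) (d : U -> U -> R) : Prop :=
  [/\ forall u v, 0 <= d u v,
      forall u v, d u v = d v u,
      forall u, d u u = 0 &
      forall u v w, d u v <= alpha * (d v w + d w u)].

(* d(S): sum over unordered pairs {u,v} of distinct elements of S
   (each pair counted once, via the enumeration order of U) *)
Definition dsum (d : U -> U -> R) (S : {set U}) : R :=
  \sum_(u in S) \sum_(v in S | (enum_rank u < enum_rank v)%N) d u v.

Definition monotone_set (f : {set U} -> R) : Prop :=
  forall S T : {set U}, S \subset T -> f S <= f T.

Definition submodular (f : {set U} -> R) : Prop :=
  forall (S T : {set U}) (u : U), S \subset T -> u \notin T ->
    f (u |: S) - f S >= f (u |: T) - f T.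

Definition phi (f : {set U} -> R) (lam : R) (d : U -> U -> R) (S : {set U}) : R :=
  f S + lam * dsum d S.

Definition gain (f : {set U} -> R) (lam : R) (d : U -> U -> R)
  (S : {set U}) (u : U) : R :=
  (f (u |: S) - f S) / 2 + lam * \sum_(v in S) d u v.

(* s is a possible run of the greedy algorithm (arbitrary tie-breaking):
   s lists the p picked elements in order; each pick x, made when the
   current set consists of the elements of prefix a, is not yet in the set
   and maximizes the gain over all elements not yet in the set. *)
Definition greedy_run (f : {set U} -> R) (lam : R) (d : U -> U -> R)
  (p : nat) (s : seq U) : Prop :=
  size s = p /\
  forall (a : seq U) (x : U) (b : seq U), s = a ++ x :: b ->
    x \notin a /\
    forall u, u \notin a ->
      gain f lam d [set y in a] u <= gain f lam d [set y in a] x.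

End Defs.

(* Main.v *)
Require Import Defs.
From mathcomp Require Import all_boot all_order all_algebra.
From mathcomp Require Import ring lra zify.
Import Order.TTheory GRing.Theory Num.Theory.
Local Open Scope ring_scope.
Set Implicit Arguments.

Section Aux.
Variables (R : realFieldType) (U : finType).
Variable d : U -> U -> R.
Hypothesis dsym : forall u v, d u v = d v u.
Hypothesis d0 : forall u, d u u = 0.

Definition D2 (S : {set U}) : R := \sum_(u in S) \sum_(v in S) d u v.
Definition cr (X Y : {set U}) : R := \sum_(u in X) \sum_(v in Y) d u v.

Lemma dsumE S : 2 * dsum d S = D2 S.
Proof.
rewrite /dsum /D2.
have E : forall u v, d u v = (if (enum_rank u < enum_rank v)%N then d u v else 0)
                       + (if (enum_rank v < enum_rank u)%N then d v u else 0).
  move=> u v; case: ltngtP => H.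
  - by rewrite addr0.
  - by rewrite add0r dsym.
  - have /enum_rank_inj -> : enum_rank u = enum_rank v by apply: val_inj.
    by rewrite d0 addr0.
symmetry.
rewrite (eq_bigr (fun u => \sum_(v in S) (if (enum_rank u < enum_rank v)%N then d u v else 0)
   + \sum_(v in S) (if (enum_rank v < enum_rank u)%N then d v u else 0))); last first.
  by move=> u _; rewrite -big_split; apply: eq_bigr => v _; exact: E.
rewrite big_split /= [X in _ + X]exchange_big /=.
rewrite mulr2n mulrDl !mul1r; congr (_ + _); apply: eq_bigr => u _; by rewrite big_mkcondr.
Qed.

Lemma cr_ge0 X Y : (forall u v, 0 <= d u v) -> 0 <= cr X Y.
Proof. by move=> H; apply: sumr_ge0 => u _; apply: sumr_ge0. Qed.

Lemma D2_ge0 X : (forall u v, 0 <= d u v) -> 0 <= D2 X.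
Proof. by move=> H; apply: sumr_ge0 => u _; apply: sumr_ge0. Qed.

Lemma crC X Y : cr X Y = cr Y X.
Proof.
rewrite /cr exchange_big; apply: eq_bigr => u _; apply: eq_bigr => v _; exact: dsym.
Qed.


Lemma tri1 (alpha : R) (Ht : forall u v w, d u v <= alpha * (d v w + d w u))
  (X : {set U}) (y : U) :
  D2 X <= 2 * alpha * (#|X|%:R - 1) * \sum_(u in X) d u y.
Proof.
have step : forall u, u \in X ->
  \sum_(v in X) d u v + alpha * (d u y + d y u) <=
  alpha * \sum_(v in X) (d v y + d y u).
  move=> u uX.
  rewrite (bigD1 u) //= [X in _ <= alpha * X](bigD1 u) //= d0 add0r.
  rewrite [in X in _ <= X]mulrDr [in X in _ <= X]addrC; apply: lerD => //.
  rewrite mulr_sumr; apply: ler_sum => v _; exact: Ht.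
set c := \sum_(u in X) d u y.
have cE1 : \sum_(u in X) d u y = c by [].
have cE : \sum_(u in X) d y u = c by apply: eq_bigr => u _; rewrite dsym.
have H : D2 X + alpha * \sum_(u in X) (d u y + d y u) <=
   alpha * \sum_(u in X) \sum_(v in X) (d v y + d y u).
  rewrite /D2 !mulr_sumr -big_split /=; apply: ler_sum => u uX.
  exact: step.
have E2 : \sum_(u in X) \sum_(v in X) (d v y + d y u) = c *+ #|X| + c *+ #|X|.
  rewrite (eq_bigr (fun u => c + d y u *+ #|X|)); last first.
    by move=> u _; rewrite big_split /= sumr_const.
  by rewrite big_split /= sumr_const sumrMnl cE.
clearbody c.
rewrite E2 big_split /= cE cE1 -[c *+ _]mulr_natr in H.
have H2 : D2 X <= alpha * (c * #|X|%:R + c * #|X|%:R) - alpha * (c + c) by rewrite lerBrDr.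
apply: (le_trans H2); rewrite le_eqVlt; apply/orP; left; apply/eqP.
move: (#|X|%:R : R) => n; ring.
Qed.



Lemma tri (alpha : R) (Ht : forall u v w, d u v <= alpha * (d v w + d w u))
  (X Y : {set U}) :
  #|Y|%:R * D2 X <= 2 * alpha * (#|X|%:R - 1) * cr X Y.
Proof.
have H : \sum_(y in Y) D2 X <= \sum_(y in Y) (2 * alpha * (#|X|%:R - 1) * \sum_(u in X) d u y).
  by apply: ler_sum => y _; exact: tri1.
rewrite sumr_const -mulr_sumr in H.
by rewrite /cr exchange_big /= mulr_natl.
Qed.

Lemma D2_split (O G : {set U}) :
  D2 O = D2 (O :&: G) + D2 (O :\: G) + 2 * cr (O :\: G) (O :&: G).
Proof.
rewrite /D2 (big_setID G) /=.
rewrite (eq_bigr (fun u => \sum_(v in O :&: G) d u v + \sum_(v in O :\: G) d u v));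
  last by move=> u _; rewrite (big_setID G).
rewrite [X in _ + X](eq_bigr (fun u => \sum_(v in O :&: G) d u v + \sum_(v in O :\: G) d u v));
  last by move=> u _; rewrite (big_setID G).
rewrite !big_split /=.
have -> : \sum_(i in O :&: G) \sum_(v in O :\: G) d i v = cr (O :\: G) (O :&: G).
  by rewrite crC.
rewrite -/(cr (O :\: G) (O :&: G)).
rewrite -/(D2 (O :&: G)) -/(D2 (O :\: G)).
ring.
Qed.

Lemma cr_split (A G O : {set U}) : cr A G = cr A (G :&: O) + cr A (G :\: O).
Proof.
rewrite /cr -big_split /=; apply: eq_bigr => u _; exact: big_setID.
Qed.

Lemma dsum_add (G : {set U}) x : x \notin G ->
  dsum d (x |: G) = dsum d G + \sum_(v in G) d x v.
Proof.
move=> xG.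
have E : D2 (x |: G) = D2 G + 2 * \sum_(v in G) d x v.
  have SU : forall F : U -> R, \sum_(v in x |: G) F v = F x + \sum_(v in G) F v.
    by move=> F; rewrite big_setU1.
  rewrite /D2 SU /= (SU (d x)) d0 add0r.
  rewrite [X in _ + X = _](eq_bigr (fun u => d u x + \sum_(v in G) d u v)); last first.
    by move=> u _; rewrite (SU (d u)).
  rewrite big_split /=.
  have -> : \sum_(i in G) d i x = \sum_(v in G) d x v by apply: eq_bigr => v _; exact: dsym.
  ring.
have E1 := dsumE (x |: G); have E2 := dsumE G.
rewrite E -E2 in E1.
lra.
Qed.

End Aux.

Lemma step_arith (R : realFieldType) (a b c al X Y PA QC : R) :
  a = 1 \/ 2 <= a -> 0 <= b -> 0 <= c -> b + 1 <= a -> 1 <= al ->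
  0 <= X -> 0 <= Y -> 0 <= PA -> 0 <= QC ->
  b * PA <= 2 * al * (a - 1) * X ->
  c * PA <= 2 * al * (a - 1) * Y ->
  a * QC <= 2 * al * (c - 1) * Y ->
  (a = 1 -> PA <= 0) ->
  a * (b + c) * (PA + QC + 2 * Y) <= 2 * al * (a + c) * (a + c - 1) * (X + Y).
Proof.
move=> [a1|a2] b0 c0 ba al1 X0 Y0 PA0 QC0 I1 I2 I3 IA.
  have PA00 : PA = 0 by apply/eqP; rewrite eq_le PA0 IA.
  subst a PA.
  have bb : b = 0 by lra.
  subst b.
  rewrite mul1r in I3.
  have -> : 2 * al * (1 + c) * (1 + c - 1) * (X + Y) = c * (2 * al * (1 + c) * (X + Y)) by ring.
  rewrite mul1r !add0r.
  have H1 : c * (QC + 2 * Y) <= c * (2 * al * (c - 1) * Y + 2 * Y).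
    by apply: ler_wpM2l => //; lra.
  apply: (le_trans H1).
  have H2 : 0 <= c * (2 * al * (1 + c) * (X + Y)) - c * (2 * al * (c - 1) * Y + 2 * Y).
    have -> : c * (2 * al * (1 + c) * (X + Y)) - c * (2 * al * (c - 1) * Y + 2 * Y)
       = c * (2 * al * (1 + c) * X + (4 * al - 2) * Y) by ring.
    apply: mulr_ge0 => //; apply: addr_ge0; apply: mulr_ge0 => //; try nra.
  lra.
set p := a + c. set i := b + c.
set e1 := 2 * al * (a - 1) * X - b * PA.
set e2 := 2 * al * (a - 1) * Y - c * PA.
set e3 := 2 * al * (c - 1) * Y - a * QC.
have E : (a - 1) * (2 * al * p * (p - 1) * (X + Y) - a * i * (PA + QC + 2 * Y)) =
  p * (p - 1) * e1 + (p - 1) * (p - i) * e2 + (a - 1) * i * e3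
  + 2 * (a - 1) * i * a * (al - 1) * Y + a * i * c * PA.
  rewrite /e1 /e2 /e3 /p /i; ring.
have G : 0 <= (a - 1) * (2 * al * p * (p - 1) * (X + Y) - a * i * (PA + QC + 2 * Y)).
  rewrite E.
  have e10 : 0 <= e1 by rewrite /e1; lra.
  have e20 : 0 <= e2 by rewrite /e2; lra.
  have e30 : 0 <= e3 by rewrite /e3; lra.
  have p0 : 0 <= p by rewrite /p; lra.
  have p1 : 0 <= p - 1 by rewrite /p; lra.
  have pi : 0 <= p - i by rewrite /p /i; lra.
  have i0 : 0 <= i by rewrite /i; lra.
  have a0 : 0 <= a - 1 by lra.
  have aa : 0 <= a by lra.
  have al0 : 0 <= al - 1 by lra.
  repeat apply: addr_ge0; repeat apply: mulr_ge0 => //.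
have a10 : 0 < a - 1 by lra.
rewrite pmulr_rge0 // in G.
lra.
Qed.

Lemma sub_sum (R : realFieldType) (U : finType) (f : {set U} -> R) :
  monotone_set f -> submodular f ->
  forall (G : {set U}) (r : seq U),
  f (G :|: [set y in r]) - f G <= \sum_(u <- r) (f (u |: G) - f G).
Proof.
move=> mono sub G; elim=> [|x r IH].
  rewrite big_nil.
  have -> : [set y in [::]] = set0 :> {set U} by apply/setP => y; rewrite !inE.
  by rewrite setU0 subrr.
rewrite big_cons.
have -> : G :|: [set y in x :: r] = x |: (G :|: [set y in r]).
  by apply/setP => y; rewrite !inE; case: (y == x); case: (y \in G).
set T := G :|: [set y in r].
have -> : f (x |: T) - f G = (f (x |: T) - f T) + (f T - f G) by ring.
apply: lerD => //.
case: (boolP (x \in T)) => xT.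
  rewrite (setUidPr _); last by rewrite sub1set.
  rewrite subrr subr_ge0; apply: mono; exact: subsetUr.
apply: sub => //; exact: subsetUl.
Qed.

Lemma combine (R : realFieldType) (a p al lam g S F cr D i : R) :
  1 <= a -> a <= p -> 1 <= al -> 0 <= lam -> 0 <= F -> 1 <= p -> 0 <= i ->
  F <= S -> S / 2 + lam * cr <= a * g -> a * i * D <= 2 * al * p * (p - 1) * cr ->
  al * (p - 1) * F + lam * i * D <= 2 * al * p * (p - 1) * g.
Proof.
move=> a1 ap al1 l0 F0 p1 i0 FS h1 h3.
set K := 2 * al * p * (p - 1).
have K0 : 0 <= K by rewrite /K; repeat apply: mulr_ge0; lra.
have h4 : K * (S / 2 + lam * cr) <= K * (a * g) by apply: ler_wpM2l.
have h5 : K * (F / 2) <= K * (S / 2) by apply: ler_wpM2l => //; lra.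
have h6 : lam * (a * i * D) <= lam * (K * cr) by apply: ler_wpM2l.

have h7 : a * (al * (p - 1) * F) <= p * (al * (p - 1) * F).
  apply: ler_wpM2r => //; apply: mulr_ge0 => //; apply: mulr_ge0; lra.
have h8 : a * (al * (p - 1) * F + lam * i * D) <= a * (K * g).
  have h9 : K * (F / 2) = p * (al * (p - 1) * F) by rewrite /K; field.
  have E1 : K * (S / 2 + lam * cr) = K * (S / 2) + lam * (K * cr) by ring.
  have E2 : a * (al * (p - 1) * F + lam * i * D) = a * (al * (p - 1) * F) + lam * (a * i * D) by ring.
  rewrite E2; rewrite E1 in h4; lra.
rewrite ler_pM2l in h8; last by lra.
exact: h8.
Qed.

Lemma sum_id (R : realFieldType) (p : nat) :
  2 * \sum_(0 <= i < p) (i%:R : R) = p%:R * (p%:R - 1).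
Proof.
elim: p => [|p IH]; first by rewrite big_geq // mulr0 mul0r.
rewrite big_nat_recr //= mulrDr IH -natr1; ring.
Qed.

Arguments D2 {R U}.
Arguments cr {R U}.
Arguments dsumE {R U d}.
Arguments cr_ge0 {R U d}.
Arguments D2_ge0 {R U d}.
Arguments crC {R U d}.
Arguments tri {R U d}.
Arguments D2_split {R U d}.
Arguments cr_split {R U d}.
Arguments dsum_add {R U d}.
Arguments step_arith {R}.
Arguments combine {R}.

Lemma natfact (a b c i p : nat) : (a + c = p -> b + c = i -> i < p -> b + 1 <= a)%N.
Proof. lia. Qed.
Arguments natfact {a b c i p}.

Unset Implicit Arguments.

Theorem theorem1 (R : realFieldType) (U : finType) (p : nat)
  (lam alpha : R) (d : U -> U -> R) (f : {set U} -> R)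
  (s : seq U) (O : {set U}) :
  (0 < p)%N -> (p <= #|U|)%N ->
  0 <= lam -> 1 <= alpha ->
  relaxed_semimetric alpha d ->
  (forall S, 0 <= f S) -> monotone_set f -> submodular f ->
  greedy_run f lam d p s ->
  #|O| = p ->
  (forall S : {set U}, #|S| = p -> phi f lam d S <= phi f lam d O) ->
  phi f lam d [set y in s] >= phi f lam d O / (2 * alpha).
Proof.
move=> p0 pU lam0 al1 [dge dsym d0 Ht] f0 mono sub [sz gr] Ocard _.
have [x0 _] : exists y : U, y \in s.
  case: s sz gr => [|y s'] /= szs _; first by rewrite -szs in p0.
  by exists y; rewrite inE eqxx.
pose G i := [set y in take i s].
pose x i := nth x0 s i.
pose g i := gain f lam d (G i) (x i).
have hsplit : forall i, (i < p)%N -> s = take i s ++ x i :: drop i.+1 s.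
  by move=> i ip; rewrite -drop_nth ?sz // cat_take_drop.
have xnG : forall i, (i < p)%N -> x i \notin G i.
  by move=> i ip; rewrite inE; case: (gr _ _ _ (hsplit i ip)).
have xmax : forall i u, (i < p)%N -> u \notin G i -> gain f lam d (G i) u <= g i.
  move=> i u ip; rewrite inE => uG; case: (gr _ _ _ (hsplit i ip)) => _; exact.
have GS : forall i, (i < p)%N -> G i.+1 = x i |: G i.
  move=> i ip; rewrite /G (take_nth x0) ?sz //.
  by apply/setP => y; rewrite !inE mem_rcons inE.
have Gcard : forall i, (i <= p)%N -> #|G i| = i.
  elim=> [|i IH] ip; first by rewrite /G take0; apply/eqP; rewrite cards_eq0; apply/eqP/setP => y; rewrite !inE.
  by rewrite GS // cardsU1 xnG // IH // ltnW.
have Gp : G p = [set y in s] by rewrite /G -sz take_size.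
have GsubGp : forall i, G i \subset G p.
  move=> i; apply/subsetP => y; rewrite Gp !inE; exact: mem_take.
have G0 : G 0 = set0 by rewrite /G take0; apply/setP => y; rewrite !inE.
have phiS : forall i, (0 <= i < p)%N ->
    phi f lam d (G i.+1) - phi f lam d (G i) = g i + (f (G i.+1) - f (G i)) / 2.
  move=> i /andP [_ ip]; rewrite /phi /g /gain GS // (dsum_add dsym d0) ?xnG //; by field.
have tele : phi f lam d (G p) = f (G 0) + \sum_(0 <= i < p) g i + (f (G p) - f (G 0)) / 2.
  have T1 : \sum_(0 <= i < p) (phi f lam d (G i.+1) - phi f lam d (G i)) =
     phi f lam d (G p) - phi f lam d (G 0) by rewrite telescope_sumr.
  have T2 : \sum_(0 <= i < p) (f (G i.+1) - f (G i)) = f (G p) - f (G 0) by rewrite telescope_sumr.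
  rewrite (eq_big_nat _ _ phiS) big_split /= -mulr_suml T2 in T1.
  have P0 : phi f lam d (G 0) = f (G 0) by rewrite /phi /dsum G0 big_set0 mulr0 addr0.
  rewrite P0 in T1; lra.
pose F := Num.max 0 (f O - f (G p)).
have F0 : 0 <= F by rewrite le_max lexx.
have F1 : f O - f (G p) <= F by rewrite le_max lexx orbT.
have gge0 : forall i, 0 <= g i.
  move=> i; rewrite /g /gain; apply: addr_ge0.
    apply: divr_ge0 => //; rewrite subr_ge0; apply: mono; exact: subsetUr.
  by apply: mulr_ge0 => //; apply: sumr_ge0 => v _.
have LB : forall i, (0 <= i < p)%N ->
   alpha * (p%:R - 1) * F + lam * i%:R * D2 d O <= 2 * alpha * p%:R * (p%:R - 1) * g i
   /\ F <= 2 * p%:R * g i.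
  move=> i /andP [_ ip].
  set Gi := G i. set A := O :\: Gi. set B := Gi :\: O. set C := O :&: Gi.
  have Ai : (#|A| + #|C| = p)%N by rewrite addnC cardsID.
  have Ci : (#|C| <= i)%N.
    by rewrite -(Gcard i (ltnW ip)); apply: subset_leq_card; apply: subsetIr.
  have Bi : (#|B| + #|C| = i)%N by rewrite /C setIC addnC cardsID Gcard // ltnW.
  have a1 : (1 <= #|A|)%N by lia.
  have ap : (#|A| <= p)%N by lia.
  have hsum : \sum_(u in A) gain f lam d Gi u <= #|A|%:R * g i.
    apply: (@le_trans _ _ (\sum_(u in A) g i)); last by rewrite sumr_const mulr_natl.
    apply: ler_sum => u; rewrite inE => /andP [uG _]; exact: xmax.
  have hsumE : \sum_(u in A) gain f lam d Gi u =
      (\sum_(u in A) (f (u |: Gi) - f Gi)) / 2 + lam * cr d A Gi.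
    by rewrite /gain big_split /= -mulr_suml -mulr_sumr /cr.
  have hF : F <= \sum_(u in A) (f (u |: Gi) - f Gi).
    rewrite ge_max; apply/andP; split.
      apply: sumr_ge0 => u _; rewrite subr_ge0; apply: mono; exact: subsetUr.
    have H := sub_sum mono sub Gi (enum A).
    rewrite big_enum /= in H.
    have EA : [set y in enum A] = A by apply/setP => y; rewrite inE mem_enum.
    rewrite EA in H.
    have HO : f O <= f (Gi :|: A).
      apply: mono; apply/subsetP => y yO; rewrite !inE yO andbT; exact: orbN.
    have HG : f Gi <= f (G p) by apply: mono; exact: GsubGp.
    lra.
  have hdist : #|A|%:R * i%:R * D2 d O <= 2 * alpha * p%:R * (p%:R - 1) * cr d A Gi.
    have I1 := tri dsym d0 alpha Ht A B.
    have I2 := tri dsym d0 alpha Ht A C.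
    have I3 := tri dsym d0 alpha Ht C A.
    have IA0 := tri dsym d0 alpha Ht A A.
    rewrite (crC dsym C A) in I3.
    have key := step_arith (#|A|%:R) (#|B|%:R) (#|C|%:R) alpha (cr d A B) (cr d A C)
      (D2 d A) (D2 d C).
    have aor : #|A|%:R = 1 :> R \/ 2 <= #|A|%:R :> R.
      move: a1; case: #|A| => [|[|n]] // _; [by left | right].
      by rewrite ler_nat.
    have ba : #|B|%:R + 1 <= #|A|%:R :> R.
      have : ((#|B| + 1)%:R <= (#|A|%:R : R)) by rewrite ler_nat; exact: (natfact Ai Bi ip).
      by rewrite natrD.
    have IA : #|A|%:R = 1 :> R -> D2 d A <= 0.
      move=> h; rewrite h subrr mulr0 mul0r mul1r in IA0; exact: IA0.
    have := key aor (ler0n _ _) (ler0n _ _) ba al1 (cr_ge0 _ _ dge) (cr_ge0 _ _ dge)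
      (D2_ge0 _ dge) (D2_ge0 _ dge) I1 I2 I3 IA.
    rewrite -natrD Bi -natrD Ai.
    rewrite (D2_split dsym O Gi) (cr_split A Gi O) -/A (setIC Gi O) -/C -/B.
    by rewrite (addrC (D2 d C)) (addrC (cr d A C)).
  split.
    apply: (combine (#|A|%:R) (p%:R) alpha lam (g i) (\sum_(u in A) (f (u |: Gi) - f Gi))
      F (cr d A Gi) (D2 d O) (i%:R)); rewrite ?ler1n ?ler_nat //.
    by move: hsum; rewrite hsumE.
  have h1 : F / 2 <= #|A|%:R * g i.
    rewrite hsumE in hsum.
    have : 0 <= lam * cr d A Gi by apply: mulr_ge0 => //; exact: cr_ge0.
    lra.
  have h2 : #|A|%:R * g i <= p%:R * g i by apply: ler_wpM2r => //; rewrite ler_nat.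
  lra.
have S1 : \sum_(0 <= i < p) (alpha * (p%:R - 1) * F + lam * i%:R * D2 d O) <=
    \sum_(0 <= i < p) (2 * alpha * p%:R * (p%:R - 1) * g i).
  by apply: ler_sum_nat => i hi; exact: (LB i hi).1.
have S2 : \sum_(0 <= i < p) F <= \sum_(0 <= i < p) (2 * p%:R * g i).
  by apply: ler_sum_nat => i hi; exact: (LB i hi).2.
set Sg := \sum_(0 <= i < p) g i.
have L1 : \sum_(0 <= i < p) (alpha * (p%:R - 1) * F + lam * i%:R * D2 d O) =
    p%:R * (alpha * (p%:R - 1) * F) + lam * D2 d O * \sum_(0 <= i < p) (i%:R : R).
  rewrite big_split /= sumr_const_nat subn0 mulr_sumr mulr_natl; congr (_ + _).
  apply: eq_bigr => i _; ring.
have S1' : p%:R * (alpha * (p%:R - 1) * F) + lam * D2 d O * \sum_(0 <= i < p) (i%:R : R) <=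
    2 * alpha * p%:R * (p%:R - 1) * Sg by rewrite -L1 /Sg mulr_sumr.
have S2' : p%:R * F <= p%:R * (2 * Sg).
  have e1 : \sum_(0 <= i < p) F = p%:R * F by rewrite sumr_const_nat subn0 mulr_natl.
  have e2 : \sum_(0 <= i < p) (2 * p%:R * g i) = p%:R * (2 * Sg).
    by rewrite /Sg !mulr_sumr; apply: eq_bigr => i _; ring.
  by rewrite -e1 -e2.
clear S1 S2.
have SI := sum_id R p.
have W : alpha * F + lam * D2 d O / 2 <= 2 * alpha * Sg.
  case: (ltngtP p 1) => hp.
  - by rewrite ltnNge p0 in hp.
  - have p2 : 2 <= p%:R :> R by rewrite ler_nat.
    have q : 0 < p%:R * (p%:R - 1) :> R by apply: mulr_gt0; lra.
    rewrite -(ler_pM2l q).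
    have SI' : \sum_(0 <= i < p) (i%:R : R) = p%:R * (p%:R - 1) / 2 by rewrite -SI; field.
    have E1 : p%:R * (p%:R - 1) * (alpha * F + lam * D2 d O / 2) =
       p%:R * (alpha * (p%:R - 1) * F) + lam * D2 d O * \sum_(0 <= i < p) (i%:R : R).
      by rewrite SI'; field.
    have E2 : p%:R * (p%:R - 1) * (2 * alpha * Sg) = 2 * alpha * p%:R * (p%:R - 1) * Sg by ring.
    by rewrite E1 E2.
  - have := tri dsym d0 alpha Ht O O.
    rewrite Ocard hp subrr mulr0 mul0r mul1r => h.
    have D0 : D2 d O = 0 by apply/eqP; rewrite eq_le h D2_ge0.
    rewrite hp !mul1r in S2'.
    rewrite D0 mulr0 mul0r addr0.
    have : alpha * F <= alpha * (2 * Sg) by apply: ler_wpM2l => //; lra.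
    lra.
rewrite -Gp.
have al0 : 0 < 2 * alpha by lra.
rewrite ler_pdivrMr //.
have P : phi f lam d O = f O + lam * (D2 d O / 2).
  by rewrite /phi -(dsumE dsym d0 O); field.
rewrite P tele.
have h3 : 0 <= alpha * f (G 0) by apply: mulr_ge0; [lra | exact: f0].
have h4 : alpha * (f O - f (G p)) <= alpha * F by apply: ler_wpM2l => //; lra.
have h5 : 0 <= (alpha - 1) * f O by apply: mulr_ge0; [lra | exact: f0].
rewrite -/Sg.
lra.
Qed.
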